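(* In the setting of Top Half Sampling, run with an optimal Natural LP solution $(x_{ij})$ of value $\textsc{Opt}$ on an edge-weighted instance with free disposal, define $\bar A(t)=\textsc{Opt}-A(t)$, where $A(t)$ is the algorithm's objective right before time $t$. Then \[ \frac{d}{dt}\mathbf{E}\,\bar A(t)\Big|_{t=0}\le -\textsc{Opt}. \]
   Context: Poisson arrival model: $I$ is a finite set of online types and $J$ a finite set of offline vertices, with edges $E$, $J_i$ the neighbors of type $i$, and weights $w_{ij}>0$. Type $i$ arrives by an independent Poisson process of rate $\lambda_i>0$ on $[0,1]$. Under free disposal only the heaviest edge matched to each offline vertex counts. Natural LP: maximize $\sum w_{ij}x_{ij}$ subject to $x\ge0$, $\sum_{j\in J_i}x_{ij}\le\lambda_i$, and $\sum_{i\in S}x_{ij}\le 1-e^{-\sum_{i\in S}\lambda_i}$ for all $j$ and all $S$ of neighbors of $j$. Top Half Sampling: with $w_j(t)$ the max weight matched to $j$ before $t$ ($0$ if none) and $w_{ij}(t)=\max\{w_{ij}-w_j(t),0\}$, order $J_i$ by non-increasing $w_{ij}(t)$. Let $\sigma_{i,t}(\theta)$ be the neighbor whose cumulative $x_{ij}$-interval in this order contains $\theta$, and $\perp$ (unmatched) if $\theta\ge\sum_jx_{ij}$. A type-$i$ arrival at time $t$ samples $\theta\sim U[0,\lambda_i/2)$ and is matched to $\sigma_{i,t}(\theta)$. *)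

(* Defs.v *)
From Stdlib Require Import Reals.
From Coquelicot Require Import Coquelicot.
From HB Require Import structures.
From mathcomp Require Import all_boot all_order all_algebra.
From mathcomp Require Import Rstruct.

Set Implicit Arguments.
Unset Strict Implicit.
Unset Printing Implicit Defensive.

Import Order.TTheory GRing.Theory Num.Theory.
Local Open Scope ring_scope.

Section Model.
Variables (I J : finType).

Definition lp_feasible (E : I -> J -> bool) (lam : I -> R) (x : I -> J -> R) : Prop :=
  [/\ (forall i j, 0 <= x i j),
      (forall i j, ~~ E i j -> x i j = 0),
      (forall i, \sum_(j | E i j) x i j <= lam i) &
      (forall j (S : {set I}), S \subset [set i | E i j] ->
         \sum_(i in S) x i j <= 1 - exp (- \sum_(i in S) lam i))].

Definition lp_value (E : I -> J -> bool) (w : I -> J -> R) (x : I -> J -> R) : R :=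
  \sum_i \sum_(j | E i j) w i j * x i j.

Definition lp_optimal (E : I -> J -> bool) (w : I -> J -> R) (lam : I -> R)
    (x : I -> J -> R) : Prop :=
  lp_feasible E lam x /\
  forall y, lp_feasible E lam y -> lp_value E w y <= lp_value E w x.

(* sigma_{i,t}(theta): walk the ordered neighbour list, cumulative
   x_ij-intervals [c_{m-1}, c_m); None = unmatched (bottom). *)
Fixpoint sigma_seq (xi : J -> R) (s : seq J) (theta : R) : option J :=
  match s with
  | [::] => None
  | j :: s' => if theta < xi j then Some j else sigma_seq xi s' (theta - xi j)
  end.

(* A state s : J -> R records w_j(t), the max weight matched to j so far. *)
Definition resid (w : I -> J -> R) (s : J -> R) (i : I) (j : J) : R :=
  Rmax (w i j - s j) 0.

Definition valid_order (E : I -> J -> bool) (w : I -> J -> R)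
    (ord : (J -> R) -> I -> seq J) : Prop :=
  forall s i, perm_eq (ord s i) [seq j <- enum J | E i j] /\
              sorted (fun a b => resid w s i b <= resid w s i a) (ord s i).

(* One arrival of type i with sample theta, under free disposal. *)
Definition ths_step (w : I -> J -> R) (x : I -> J -> R)
    (ord : (J -> R) -> I -> seq J) (s : J -> R) (i : I) (theta : R) : J -> R :=
  match sigma_seq (x i) (ord s i) theta with
  | None => s
  | Some j => fun k => if k == j then Rmax (s j) (w i j) else s k
  end.

Definition total_rate (lam : I -> R) : R := \sum_i lam i.

(* ths_value n s = expected objective (sum_j w_j) after n further arrivals
   of the superposed Poisson process started from state s: each arrival is
   of type i w.p. lam_i / Lambda, and samples theta ~ U[0, lam_i/2)
   (density 2/lam_i). *)
Fixpoint ths_value (w : I -> J -> R) (x : I -> J -> R) (lam : I -> R)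
    (ord : (J -> R) -> I -> seq J) (n : nat) (s : J -> R) : R :=
  match n with
  | 0 => \sum_j s j
  | n'.+1 => \sum_i (lam i / total_rate lam) *
               ((2 / lam i) *
                RInt (fun theta => ths_value w x lam ord n' (ths_step w x ord s i theta))
                     0 (lam i / 2))
  end.

(* E A(t): the number of arrivals in [0,t) is Poisson(Lambda t); the
   algorithm's behaviour depends only on the sequence of arrivals. *)
Definition expected_obj (w : I -> J -> R) (x : I -> J -> R) (lam : I -> R)
    (ord : (J -> R) -> I -> seq J) (t : R) : R :=
  Series (fun n : nat =>
    exp (- (total_rate lam * t)) * (total_rate lam * t) ^+ n / (n`!)%:R
      * ths_value w x lam ord n (fun _ => 0)).

End Model.

(* Main.v *)
Require Import Defs.
From Stdlib Require Import Reals Lra Factorial.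
From Coquelicot Require Import Coquelicot.
From HB Require Import structures.
From mathcomp Require Import all_boot all_order all_algebra.
From mathcomp Require Import Rstruct.
Import Order.TTheory GRing.Theory Num.Theory.

Section StdPart.
Local Open Scope R_scope.

Lemma series_part (u B : R) (V : nat -> R) : 0 <= u -> V 0%nat = 0 ->
  (forall n, 0 <= V n <= B) ->
  exists Rr, Series (fun n => exp(-u) * u^n / INR (Factorial.fact n) * V n) = exp(-u) * u * V 1%nat + Rr
     /\ 0 <= Rr <= B * u^2.
Proof.
intros Hu HV0 HV.
set p := fun n => exp(-u) * u^n / INR (Factorial.fact n).
assert (Hp : is_series p 1).
{ have H := is_exp_Reals u. apply is_pseries_R in H.
  have H2 := is_series_scal_l (exp (-u)) _ _ H.
  replace 1 with (scal (exp (-u)) (exp u)).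
  2:{ rewrite /scal /= /mult /=. rewrite <- exp_plus. replace (-u+u) with 0 by ring. apply exp_0. }
  eapply is_series_ext; [|exact H2]. intros n. rewrite /p /scal /= /mult /=. unfold Rdiv. ring. }
assert (Hp0 : forall n, 0 <= p n).
{ intros n. rewrite /p. apply Rmult_le_pos. apply Rmult_le_pos. left; apply exp_pos. apply pow_le; lra.
  left; apply Rinv_0_lt_compat, lt_0_INR, lt_O_fact. }
assert (HB : 0 <= B) by (destruct (HV 0%nat); lra).
set a := fun n => p n * V n.
assert (Hab : forall n, 0 <= a n <= B * p n).
{ intros n; rewrite /a; destruct (HV n); split. apply Rmult_le_pos; auto.
  rewrite (Rmult_comm B). apply Rmult_le_compat_l; auto. }
assert (HexBp : ex_series (fun n => B * p n)).
{ exists (scal B 1). apply (is_series_scal_l B _ _ Hp). }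
assert (Hexa : ex_series a).
{ apply: (@ex_series_le R_AbsRing R_CompleteNormedModule a _ _ HexBp). intros n. rewrite /norm /= /abs /=. rewrite Rabs_pos_eq; apply Hab. }
exists (Series (fun k => a (S (S k)))).
have E1 := Series_incr_1 _ Hexa.
have Hexa1 := proj1 (ex_series_incr_1 a) Hexa.
have E2 := Series_incr_1 _ Hexa1.
have Hexp : ex_series p by (exists 1; exact Hp).
have Hexp1 := proj1 (ex_series_incr_1 p) Hexp.
have F1 := Series_incr_1 _ Hexp.
have F2 := Series_incr_1 _ Hexp1.
have Sp := is_series_unique _ _ Hp.
split.
{ change (Series a = exp (- u) * u * V 1%nat + Series (fun k : nat => a (S (S k)))).
  rewrite E1 E2. rewrite /a /p /= HV0. field. }
split.
{ replace 0 with (Series (fun _ : nat => 0)).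
  2:{ rewrite (Series_ext _ (fun n : nat => 0 * 0)). all: try (intros; ring). rewrite Series_scal_l. ring. }
  apply Series_le. intros n; split; [lra|apply Hab].
  exact (proj1 (ex_series_incr_1 (fun k => a (S k))) Hexa1). }
eapply Rle_trans.
{ apply Series_le with (b := fun k => B * p (S (S k))). intros n; apply Hab.
  exact (proj1 (ex_series_incr_1 (fun k => B * p (S k))) (proj1 (ex_series_incr_1 (fun k => B * p k)) HexBp)). }
rewrite Series_scal_l.
assert (Hq : Series (fun k => p (S (S k))) = 1 - exp(-u) - exp(-u) * u).
{ rewrite Sp in F1. rewrite F2 in F1. rewrite /p /= in F1 *. 
  rewrite /p /= . lra. }
rewrite Hq. apply Rmult_le_compat_l; auto.
have He := exp_ineq1_le (-u).
have Hpos := exp_pos (-u).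
nra.
Qed.

Lemma limit_part (L V1 B : R) (f E : R -> R) : 0 <= L -> 0 <= V1 <= B ->
  (forall h, 0 < h -> exists Rr, E h = exp(-(L * h)) * (L * h) * V1 + Rr /\ 0 <= Rr <= B*(L*h)^2) ->
  (forall h, 0 < h -> f h = - (E h) / h) ->
  filterlim f (at_right 0) (locally (-(L*V1))).
Proof.
intros HL HV HE Hf.
apply filterlim_locally. intros eps.
set K := 2 * B * L^2 + 1.
assert (HK : 0 < K) by (rewrite /K; nra).
assert (Hd : 0 < eps / K) by (apply Rdiv_lt_0_compat; [apply cond_pos|auto]).
exists (mkposreal _ Hd). intros h Hb Hh.
rewrite /ball /= /AbsRing_ball /abs /minus /plus /opp /= in Hb *.
have Hb' : Rabs ((h:R) - 0) < eps / K := Hb. rewrite Rminus_0_r in Hb'. clear Hb.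
rewrite Rabs_pos_eq in Hb'; [| left; exact Hh].
rewrite Hf //.
destruct (HE h Hh) as [Rr [Eh HR]]. rewrite Eh.
set u := L * h.
have Hu : 0 <= u by (rewrite /u; nra).
have He1 := exp_ineq1_le (-u).
have He2 : exp (-u) <= 1.
{ rewrite <- exp_0. destruct Hu as [Hu|Hu]. left; apply exp_increasing; lra. rewrite <- Hu. right; f_equal; ring. }
have Hg : - (exp (- u) * u * V1 + Rr) / h + - - (L * V1) = L * V1 * (1 - exp (-u)) - Rr / h.
{ rewrite /u. field. lra. }
change (Rabs (- (exp (- u) * u * V1 + Rr) / h + - - (L * V1)) < eps).
rewrite Hg.
have HKh : K * h < eps.
{ have := Rmult_lt_compat_l K _ _ HK Hb'. replace (K * (eps / K)) with (pos eps) by (field; lra). lra. }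
have H1 : 0 <= L * V1 * (1 - exp (-u)) <= L * V1 * u.
{ split; apply Rmult_le_compat_l || apply Rmult_le_pos; nra. }
have H2 : 0 <= Rr / h <= B * L^2 * h.
{ split. apply Rdiv_le_0_compat; lra.
  apply (Rmult_le_reg_r h); [lra|]. replace (Rr / h * h) with Rr by (field; lra).
  rewrite /u in HR. nra. }
have H3 : L * V1 * u <= B * L^2 * h.
{ rewrite /u. have : 0 <= L * L * h by nra. nra. }
have H4 : 2 * (B * L^2 * h) < eps.
{ rewrite /K in HKh. lra. }
apply Rabs_def1; lra.
Qed.

Lemma aux_alg (O e h : R) : 0 < h -> (O + - e + - (O + - 0)) * / h = - e / h.
Proof. move=> Hh. field. lra. Qed.

Lemma aux2S (L l Rr : R) : 0 < l -> l <= L -> L * (l * / L * (2 * / l * Rr)) = 2 * Rr.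
Proof. move=> h1 h2. field. lra. Qed.


Lemma ex_RInt_shift (g : R -> R) c p q :
  ex_RInt g (p - c) (q - c) -> ex_RInt (fun t => g (t - c)) p q.
Proof.
move=> H.
have H2 : ex_RInt g (1 * p + - c) (1 * q + - c).
{ by replace (1 * p + - c) with (p - c) by ring; replace (1 * q + - c) with (q - c) by ring. }
have := ex_RInt_comp_lin g 1 (-c) p q H2.
apply ex_RInt_ext => t _. rewrite /scal /= /mult /=. rewrite Rmult_1_l. f_equal. rewrite /Rminus. ring.
Qed.

Lemma sigma_ex_RInt (J : finType) (F : option J -> R) (xi : J -> R) (l : seq J) :
  forall a b, ex_RInt (fun t => F (sigma_seq xi l t)) a b.
Proof.
elim: l => [|j l IH] a b /=.
{ apply ex_RInt_const. }
set c := xi j.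
have H1 : forall p q, p <= c -> q <= c ->
   ex_RInt (fun t => F (if (t < c)%R then Some j else sigma_seq xi l (t - c)%R)) p q.
{ move=> p q Hp Hq. apply: (ex_RInt_ext (fun _ => F (Some j))); last by apply ex_RInt_const.
  move=> t [Ht1 Ht2]. have Htc : t < c.
  { have := Rmax_lub p q c Hp Hq. lra. }
  by have -> : (t < c)%R = true by apply/RltP. }
have H2 : forall p q, c <= p -> c <= q ->
   ex_RInt (fun t => F (if (t < c)%R then Some j else sigma_seq xi l (t - c)%R)) p q.
{ move=> p q Hp Hq. apply: (ex_RInt_ext (fun t => F (sigma_seq xi l (t - c)))); last first.
  { apply: (ex_RInt_shift (fun t => F (sigma_seq xi l t))). apply IH. }
  move=> t [Ht1 Ht2]. have Htc : c < t.
  { have := Rmin_glb p q c Hp Hq. lra. }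
  have -> : (t < c)%R = false. { apply/RltP. lra. }
  done. }
have Hac : ex_RInt (fun t => F (if (t < c)%R then Some j else sigma_seq xi l (t - c)%R)) a c.
{ destruct (Rle_dec a c). apply H1; lra. apply H2; lra. }
have Hcb : ex_RInt (fun t => F (if (t < c)%R then Some j else sigma_seq xi l (t - c)%R)) c b.
{ destruct (Rle_dec b c). apply H1; lra. apply H2; lra. }
exact: ex_RInt_Chasles Hac Hcb.
Qed.


Lemma RInt_bounds (g : R -> R) b B : 0 <= b -> ex_RInt g 0 b ->
  (forall t, 0 <= g t <= B) -> 0 <= RInt g 0 b <= b * B.
Proof.
move=> Hb Hex Hg. split.
- have := RInt_le (fun _ => 0) g 0 b Hb (ex_RInt_const _ _ _) Hex (fun t _ => proj1 (Hg t)).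
  rewrite RInt_const /scal /= /mult /=. lra.
- have := RInt_le g (fun _ => B) 0 b Hb Hex (ex_RInt_const _ _ _) (fun t _ => proj2 (Hg t)).
  rewrite RInt_const /scal /= /mult /=. lra.
Qed.

Lemma scaled_bounds (g : R -> R) two l B : two = 2 -> 0 < l -> ex_RInt g 0 (l / two) ->
  (forall t, 0 <= g t <= B) -> 0 <= (two / l) * RInt g 0 (l / two) <= B.
Proof.
move=> -> Hl Hex Hg. have [H1 H2] := RInt_bounds g (l/2) B ltac:(lra) Hex Hg.
have Hi : 0 < 2 / l by apply Rdiv_lt_0_compat; lra.
split. nra.
have := Rmult_le_compat_l _ _ _ (Rlt_le _ _ Hi) H2.
replace (2 / l * (l / 2 * B)) with B by (field; lra). done.
Qed.



End StdPart.

Local Open Scope ring_scope.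

Lemma two_R : (2%:R : R) = IZR 2.
Proof. by rewrite -INRE /=; ring. Qed.

Ltac toR := rewrite ?two_R -?RplusE -?RminusE -?RmultE -?RoppE -?RdivE -?RinvE.
Ltac toRin H := rewrite ?two_R -?RplusE -?RminusE -?RmultE -?RoppE -?RdivE -?RinvE in H.

Lemma two_E : (2%:R : R) = 2.
Proof. by rewrite -INRE /=; ring. Qed.

Section B.
Variables (I J : finType) (w : I -> J -> R) (x : I -> J -> R) (lam : I -> R)
  (ord : (J -> R) -> I -> seq J).

Lemma step_inv (M : R) s i t : (forall i j, w i j <= M) -> (forall j, 0 <= s j <= M) ->
  forall j, 0 <= ths_step w x ord s i t j <= M.
Proof.
move=> HM Hs j. rewrite /ths_step. case: (sigma_seq _ _ _) => [k|] //.
case: eqP => [_|_] //. have /andP [H1 H2] := Hs k. apply/andP; split.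
- apply/RleP. apply: Rle_trans (Rmax_l _ _). by apply/RleP.
- apply/RleP. apply: Rmax_lub; apply/RleP => //. 
Qed.

Lemma value_bounds (M : R) : (forall i j, w i j <= M) -> (forall i, 0 < lam i) ->
  forall n s, (forall j, 0 <= s j <= M) ->
  0 <= ths_value w x lam ord n s <= #|J|%:R * M.
Proof.
move=> HM Hlam. elim=> [|n IH] s Hs /=.
- apply/andP; split. apply: sumr_ge0 => j _. by case/andP: (Hs j).
  rewrite -sum1_card natr_sum mulr_suml. apply: ler_sum => j _. rewrite mul1r. by case/andP: (Hs j).
- set B := #|J|%:R * M.
  have Hc : forall i, 0 <= (2%:R / lam i) * RInt (fun theta => ths_value w x lam ord n
              (ths_step w x ord s i theta)) 0 (lam i / 2%:R) <= B.
  { move=> i. 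
    have := scaled_bounds (fun theta => ths_value w x lam ord n (ths_step w x ord s i theta)) 2%:R (lam i) B two_E.
    have Hl : Rlt 0 (lam i) by apply/RltP.
    have Hex : ex_RInt (fun theta => ths_value w x lam ord n (ths_step w x ord s i theta)) 0 (lam i / 2%:R).
    { exact (sigma_ex_RInt J (fun o => ths_value w x lam ord n (match o with None => s
         | Some j => fun k => if k == j then Rmax (s j) (w i j) else s k end)) (x i) (ord s i) 0 (lam i / 2%:R)). }
    move=> /(_ Hl Hex) H.
    have [H1 H2] : Rle 0 (2%:R / lam i * RInt (fun theta => ths_value w x lam ord n (ths_step w x ord s i theta)) 0 (lam i / 2%:R)) /\ Rle (2%:R / lam i * RInt (fun theta => ths_value w x lam ord n (ths_step w x ord s i theta)) 0 (lam i / 2%:R)) B.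
    { apply: H => t. have /andP [H1 H2] := IH _ (step_inv M s i t HM Hs). by split; apply/RleP. }
    by apply/andP; split; apply/RleP. }
  have HB : 0 <= B by have /andP [h1 h2] := IH s Hs; exact: le_trans h1 h2.
  have HL : 0 <= total_rate lam by apply: sumr_ge0 => i _; apply: ltW; apply/RltP; apply/RltP; apply: Hlam.
  apply/andP; split.
  - apply: sumr_ge0 => i _. apply: mulr_ge0; last by case/andP: (Hc i).
    apply: divr_ge0 => //. apply: ltW. apply: Hlam.
  - apply: (@le_trans _ _ (\sum_i lam i / total_rate lam * B)).
    + apply: ler_sum => i _. apply: ler_wpM2l; last by case/andP: (Hc i).
      apply: divr_ge0 => //. apply: ltW. apply: Hlam.
    + rewrite -mulr_suml -mulr_suml -/(total_rate lam).
      apply: ler_piMl => //.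
      case: (eqVneq (total_rate lam) 0) => [->|nz]; first by rewrite mul0r.
      by rewrite mulfV.
Qed.
End B.
Section C.
Variables (J : finType) (xi r : J -> R).
Definition Fr (o : option J) : R := match o with None => 0 | Some j => r j end.

Lemma RInt_shift (g : R -> R) c p q :
  ex_RInt g (p - c) (q - c) -> RInt (fun t => g (t - c)) p q = RInt g (p - c) (q - c).
Proof.
move=> H.
have H2 : ex_RInt g (Rplus (Rmult 1 p) (Ropp c)) (Rplus (Rmult 1 q) (Ropp c)) by rewrite !Rmult_1_l.
have := RInt_comp_lin g 1 (-c) p q H2. rewrite !Rmult_1_l => <-.
apply RInt_ext => t _. rewrite /scal /= /mult /= !Rmult_1_l. done.
Qed.

Lemma sigma_integral (Hx : forall j, Rle 0 (xi j)) : forall l T,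
  Rle (\sum_(j <- l) xi j) T ->
  RInt (fun t => Fr (sigma_seq xi l t)) 0 T = \sum_(j <- l) r j * xi j.
Proof.
elim=> [|j l IH] T HT /=.
- rewrite big_nil. rewrite RInt_const /scal /= /mult /=. by rewrite Rmult_0_r.
- rewrite big_cons. rewrite big_cons in HT.
  have Hs0 : Rle 0 (\sum_(k <- l) xi k).
  { elim: (l) => [|a l' IHl]; rewrite ?big_nil ?big_cons; [apply Rle_refl|].
    exact: Rplus_le_le_0_compat (Hx a) IHl. }
  have Hj := Hx j.
  have HTS : Rle (\sum_(k <- l) xi k) (T - xi j).
  { move: HT Hs0. move: (\sum_(k <- l) xi k) => S. toR. move=> ? ?. lra. }
  have HjT : Rle (xi j) T.
  { move: HT Hs0. move: (\sum_(k <- l) xi k) => S. toR. move=> ? ?. lra. }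
  set g := fun t => Fr (if (t < xi j)%R then Some j else sigma_seq xi l (t - xi j)).
  have Hex := sigma_ex_RInt J Fr xi (j :: l).
  rewrite -(RInt_Chasles g 0 (xi j) T (Hex _ _) (Hex _ _)).
  rewrite /plus /=.
  rewrite (RInt_ext g (fun _ => r j)); last first.
  { move=> t []. rewrite Rmin_left ?Rmax_right //; try exact HjT. move=> H1 H2.
    rewrite /g. by have -> : (t < xi j)%R = true by apply/RltP. }
  rewrite RInt_const /scal /= /mult /=.
  rewrite (RInt_ext g (fun t => Fr (sigma_seq xi l (t - xi j)))); last first.
  { move=> t []. rewrite Rmin_left ?Rmax_right //; try exact HjT. move=> H1 H2.
    rewrite /g. have -> : (t < xi j)%R = false. { apply/negbTE/RltP. lra. } done. }
  rewrite (RInt_shift (fun t => Fr (sigma_seq xi l t))); last by apply: sigma_ex_RInt.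
  rewrite Rminus_diag IH //. by rewrite Rminus_0_r Rmult_comm.
Qed.

Lemma sigma_mem l t k : sigma_seq xi l t = Some k -> k \in l.
Proof.
elim: l t => [|j l IH] t //=. case: ifP => _ H.
- case: H => <-. by rewrite inE eqxx.
- by rewrite inE (IH _ H) orbT.
Qed.

Lemma sigma_mono (Hr : forall j, 0 <= r j) l : sorted (fun a b => r b <= r a) l ->
  forall t1 t2, Rle t1 t2 -> Rle (Fr (sigma_seq xi l t2)) (Fr (sigma_seq xi l t1)).
Proof.
elim: l => [|j l IH] Hs t1 t2 Ht /=; first by apply Rle_refl.
have Htr : transitive (fun a b => r b <= r a).
{ move=> a b c hab hbc. exact: le_trans hbc hab. }
have Hall := order_path_min Htr Hs.
have Hsl := path_sorted Hs.
case: (boolP (t2 < xi j)) => h2.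
- have h1 : (t1 < xi j). { apply/RltP. move/RltP: h2. lra. }
  rewrite h1. apply Rle_refl.
- case: (boolP (t1 < xi j)) => h1.
  + case E: (sigma_seq xi l (t2 - xi j)) => [k|] /=.
    * have := (allP Hall) k (sigma_mem _ _ _ E). by move/RleP.
    * by apply/RleP.
  + apply: IH => //. toR. lra.
Qed.

Lemma sum_ge0_R l : (forall j, Rle 0 (xi j)) -> Rle 0 (\sum_(k <- l) xi k).
Proof.
move=> Hx. elim: l => [|a l' IHl]; rewrite ?big_nil ?big_cons; [apply Rle_refl|].
exact: Rplus_le_le_0_compat (Hx a) IHl.
Qed.

Lemma half_bound (Hx : forall j, Rle 0 (xi j)) (Hr : forall j, 0 <= r j) l L :
  sorted (fun a b => r b <= r a) l -> Rle (\sum_(j <- l) xi j) L ->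
  Rle (\sum_(j <- l) r j * xi j) (2 * RInt (fun t => Fr (sigma_seq xi l t)) 0 (L / 2)).
Proof.
move=> Hs HL.
have H0 := sum_ge0_R l Hx.
have HL0 : Rle 0 L by apply: Rle_trans H0 HL.
rewrite -(sigma_integral Hx l L HL).
set G := fun t => Fr (sigma_seq xi l t).
have Hex : forall a b, ex_RInt G a b by move=> a b; apply: sigma_ex_RInt.
rewrite -(RInt_Chasles G 0 (L / 2) L (Hex _ _) (Hex _ _)) /plus /=.
have Hsh := RInt_shift G (- (L / 2)) 0 (L / 2) (Hex _ _).
have E1 : (0 - - (L/2) : R) = L / 2 by toR; field.
have E2 : (L / 2 - - (L/2) : R) = L by toR; field.
rewrite E1 E2 in Hsh.
have Hle : Rle (RInt G (L / 2) L) (RInt G 0 (L / 2)).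
{ rewrite -Hsh. apply: RInt_le.
  - toR. lra.
  - apply: ex_RInt_shift. apply: Hex.
  - apply: Hex.
  - move=> t [Ht1 Ht2]. rewrite /G. apply: sigma_mono => //. toR. lra. }
move: Hle. move: (RInt G 0 (L / 2)) (RInt G (L / 2) L) => a b. toR. move=> ?. lra.
Qed.
End C.

Lemma factE n : Factorial.fact n = n`!.
Proof. elim: n => //= n IH. by rewrite factS IH. Qed.

Section M.
Variables (I J : finType) (E : I -> J -> bool) (w : I -> J -> R)
    (lam : I -> R) (x : I -> J -> R) (ord : (J -> R) -> I -> seq J).

Lemma sum_l_filter (F : J -> R) s i : valid_order E w ord ->
  \sum_(j <- ord s i) F j = \sum_(j | E i j) F j.
Proof.
move=> Hord. rewrite (perm_big _ (proj1 (Hord s i))) big_filter big_enum_cond //.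
Qed.

Lemma integrand0 i t :
  ths_value w x lam ord 0 (ths_step w x ord (fun _ => 0) i t) =
  Fr J (resid w (fun _ => 0) i) (sigma_seq (x i) (ord (fun _ => 0) i) t).
Proof.
rewrite /= /ths_step. case: (sigma_seq _ _ _) => [j|] /=.
- rewrite (bigD1 j) //= eqxx big1 => [|k /negbTE -> //]. 
  by rewrite addr0 /resid Rminus_0_r Rmax_comm.
- by rewrite big1.
Qed.


Lemma per_i i : valid_order E w ord -> lp_feasible E lam x ->
  \sum_(j | E i j) w i j * x i j <=
  2 * RInt (fun t => ths_value w x lam ord 0 (ths_step w x ord (fun _ => 0) i t)) 0 (lam i / 2).
Proof.
move=> Hord [Hx0 _ Hsum _].
rewrite (RInt_ext _ (fun t => Fr J (resid w (fun _ => 0) i) (sigma_seq (x i) (ord (fun _ => 0) i) t)));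
  last by move=> t _; apply: integrand0.
set r := resid w (fun _ => 0) i.
set l := ord (fun _ => 0) i.
have Hx : forall j, Rle 0 (x i j) by move=> j; apply/RleP.
have Hr : forall j, 0 <= r j by move=> j; apply/RleP; apply: Rmax_r.
have Hs := proj2 (Hord (fun _ => 0) i).
have HL : Rle (\sum_(j <- l) x i j) (lam i) by rewrite sum_l_filter //; apply/RleP.
have H := half_bound J (x i) r Hx Hr l (lam i) Hs HL.
apply: (@le_trans _ _ (\sum_(j <- l) r j * x i j)); last by apply/RleP.
rewrite sum_l_filter //. apply: ler_sum => j _. apply: ler_wpM2r => //.
apply/RleP. rewrite /r /resid Rminus_0_r. apply: Rmax_l.
Qed.

End M.

Lemma aux2 (L l Rr : R) : 0 < l -> l <= L -> L * (l / L * (2 / l * Rr)) = 2 * Rr.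
Proof. move=> /RltP h1 /RleP h2. rewrite two_R. exact: aux2S. Qed.

Theorem mainTheorem3 (I J : finType) (E : I -> J -> bool) (w : I -> J -> R)
    (lam : I -> R) (x : I -> J -> R) (ord : (J -> R) -> I -> seq J) :
  (forall i j, E i j -> 0 < w i j) ->
  (forall i, 0 < lam i) ->
  lp_optimal E w lam x ->
  valid_order E w ord ->
  let Opt := lp_value E w x in
  let Abar := fun t : R => Opt - expected_obj w x lam ord t in
  exists D : R,
    filterlim (fun h : R => (Abar h - Abar 0) / h) (at_right 0) (locally D)
    /\ D <= - Opt.
Proof.
move=> Hw Hlam [Hfeas Hopt] Hord Opt Abar.
set Lam := total_rate lam.
set V := fun n => ths_value w x lam ord n (fun _ => 0).
set M : R := \sum_i \sum_j `|w i j|.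
have HM0 : 0 <= M by apply: sumr_ge0 => i _; apply: sumr_ge0 => j _; apply: normr_ge0.
have HM : forall i j, w i j <= M.
{ move=> i j. apply: (le_trans (ler_norm _)). rewrite /M (bigD1 i) //= (bigD1 j) //= -addrA lerDl.
  apply: addr_ge0; apply: sumr_ge0 => k _ //. apply: sumr_ge0 => l _; apply: normr_ge0. }
set B : R := #|J|%:R * M.
have HV : forall n, 0 <= V n <= B.
{ move=> n. apply: (value_bounds I J w x lam ord M HM Hlam n (fun _ => 0)) => j. by rewrite lexx HM0. }
have HVR : forall n, Rle 0 (V n) /\ Rle (V n) B.
{ move=> n. have /andP [h1 h2] := HV n. by split; apply/RleP. }
have HV0 : V 0%N = 0 by rewrite /V /= big1.
have HLam : Rle 0 Lam.
{ apply/RleP. apply: sumr_ge0 => i _. apply: ltW. apply: Hlam. }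
have HE : forall t, expected_obj w x lam ord t =
   Series (fun n => Rmult (Rdiv (Rmult (exp (Ropp (Rmult Lam t))) (pow (Rmult Lam t) n)) (INR (fact n))) (V n)).
{ move=> t. rewrite /expected_obj. apply: Series_ext => n. rewrite -RpowE -INRE factE. reflexivity. }
have Hser : forall t, Rle 0 t -> exists Rr, expected_obj w x lam ord t =
   Rplus (Rmult (Rmult (exp (Ropp (Rmult Lam t))) (Rmult Lam t)) (V 1%N)) Rr /\
   Rle 0 Rr /\ Rle Rr (Rmult B (pow (Rmult Lam t) 2)).
{ move=> t Ht. rewrite HE. apply: series_part => //. exact: Rmult_le_pos HLam Ht. }
have E0 : expected_obj w x lam ord 0 = 0.
{ have [Rr [-> [h1 h2]]] := Hser 0 (Rle_refl _).
  have h3 : Rr = R0.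
  { apply: Rle_antisym => //. apply: (Rle_trans _ _ _ h2). right. rewrite /= !Rmult_0_r. ring. }
  rewrite h3 !Rmult_0_r Rmult_0_l Rplus_0_r. reflexivity. }
exists (-(Lam * V 1%N)). split.
- apply: (limit_part Lam (V 1%N) B _ (expected_obj w x lam ord)) => //.
  + move=> h hpos. exact: Hser h (Rlt_le _ _ hpos).
  + move=> h hpos. rewrite /Abar E0. exact: aux_alg.
- rewrite lerN2.
  have -> : V 1%N = \sum_i (lam i / total_rate lam) * ((2 / lam i) *
      RInt (fun theta => ths_value w x lam ord 0 (ths_step w x ord (fun _ => 0) i theta)) 0 (lam i / 2)) by [].
  rewrite /Opt /lp_value /Lam mulr_sumr. apply: ler_sum => i _.
  have Hli : lam i <= total_rate lam.
  { rewrite /total_rate (bigD1 i) //= lerDl. apply: sumr_ge0 => k _. apply: ltW. apply: Hlam. }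
  rewrite aux2 //. exact: per_i.
Qed.
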